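(* Let $(i^*_k,j^*_k)$ and $\mu_k$, $k=1,\dots,n$, be a sequence of $k$-th order bottleneck edges and robustness margins for the weights $w_{i,j}=d(p_i(0),g_j)$, and let $\Pi^*$ be a sequential bottleneck optimising assignment for this sequence. Let $\mu=\min_{k\in\{1,\dots,n\}}\mu_k$ and suppose there is $s$ with $s\ge s_{i,i'}$ for all distinct $i,i'\in\mathcal A$ and $s<\mu$. Define $A_k=\min_{l\in\{1,\dots,k\}}\big(w_{i^*_l,j^*_l}+\mu_l\big)-\tfrac12(\mu+s)$ for $k=1,\dots,n$. Let $a:[0,T]\to\mathbb R$ satisfy $a(t)\ge\tfrac12(\mu-s)$ for all $t$. Set $a_{i^*_k}(t)=\min\{a(t),A_k\}$ for $k=1,\dots,n$, $a_{i'}(t)=a_{i^*_n}(t)$ for every $i'\in\mathcal A\setminus\{i^*_1,\dots,i^*_n\}$, and $b_{j^*_k}(t)=A_k-a_{i^*_k}(t)+\tfrac12(\mu-s)$ for $k=1,\dots,n$. Suppose that for all $t\in[0,T]$: $d(p_i(0),p_i(t))<a_i(t)$ for every $i\in\mathcal A$, and $d(p_{i^*_k}(t),g_{j^*_k})<b_{j^*_k}(t)$ for every $k\in\{1,\dots,n\}$. Then for every $k\in\{1,\dots,n\}$, every $i'\in\mathcal A\setminus\{i^*_k\}$ and every $t\in[0,T]$, agents $i^*_k$ and $i'$ do not collide at time $t$, i.e. $d(p_{i^*_k}(t),p_{i'}(t))>s_{i^*_k,i'}$.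
   Context: Let $\mathcal A$ be a finite set of agents with $|\mathcal A|=m>1$ and $\mathcal T$ a finite set of tasks with $m\ge|\mathcal T|=n\ge 1$. Let $d:\mathbb R^{n_p}\times\mathbb R^{n_p}\to[0,\infty)$ be a distance function that is symmetric and satisfies the triangle inequality. Each agent $i\in\mathcal A$ has a position $p_i(t)\in\mathbb R^{n_p}$ for $t\in[0,T]$, each task $j\in\mathcal T$ has a destination $g_j\in\mathbb R^{n_p}$, and for $i\ne i'$ a safety distance $s_{i,i'}=s_{i',i}\ge 0$ is given; agents $i\ne i'$ do not collide at time $t$ if $d(p_i(t),p_{i'}(t))>s_{i,i'}$. The assignment weights are $\mathcal W=\{w_{i,j}=d(p_i(0),g_j)\}$. An assignment is a family $\Pi=\{\pi_{i,j}\in\{0,1\}:(i,j)\in\mathcal A\times\mathcal T\}$. For $\bar{\mathcal A}\subseteq\mathcal A$, $\bar{\mathcal T}\subseteq\mathcal T$ and $\hat{\mathcal E}\subseteq\bar{\mathcal A}\times\bar{\mathcal T}$, $\mathcal P_{\bar{\mathcal A},\bar{\mathcal T}}(\hat{\mathcal E})$ is the set of assignments with $\sum_{i:(i,j)\in\hat{\mathcal E}}\pi_{i,j}=1$ for every $j\in\bar{\mathcal T}$ and $\sum_{j:(i,j)\in\hat{\mathcal E}}\pi_{i,j}\le 1$ for every $i\in\bar{\mathcal A}$. Define $b(\Pi,\hat{\mathcal E})=\max_{(i,j)\in\hat{\mathcal E}}\pi_{i,j}w_{i,j}$; $B_{\bar{\mathcal A},\bar{\mathcal T}}(\hat{\mathcal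 E})=\min_{\Pi\in\mathcal P_{\bar{\mathcal A},\bar{\mathcal T}}(\hat{\mathcal E})}b(\Pi,\hat{\mathcal E})$ (with $\min\emptyset=+\infty$); $\mathcal B_{\bar{\mathcal A},\bar{\mathcal T}}(\hat{\mathcal E})$ the set of minimisers; $E_{\bar{\mathcal A},\bar{\mathcal T}}(\hat{\mathcal E})=\{(i,j)\in\hat{\mathcal E}: w_{i,j}=B_{\bar{\mathcal A},\bar{\mathcal T}}(\hat{\mathcal E})\}$. For $\bar{\mathcal E}=\bar{\mathcal A}\times\bar{\mathcal T}$ with $|\bar{\mathcal E}|>1$: $e_{\bar{\mathcal A},\bar{\mathcal T}}=\arg\max_{(i,j)\in E_{\bar{\mathcal A},\bar{\mathcal T}}(\bar{\mathcal E})}B_{\bar{\mathcal A},\bar{\mathcal T}}(\bar{\mathcal E}\setminus\{(i,j)\})$ and $r_{\bar{\mathcal A},\bar{\mathcal T}}=\max_{(i,j)\in E_{\bar{\mathcal A},\bar{\mathcal T}}(\bar{\mathcal E})}\big(B_{\bar{\mathcal A},\bar{\mathcal T}}(\bar{\mathcal E}\setminus\{(i,j)\})-w_{i,j}\big)$; if $|\bar{\mathcal E}|=1$, $e_{\bar{\mathcal A},\bar{\mathcal T}}=\bar{\mathcal E}$ and $r_{\bar{\mathcal A},\bar{\mathcal T}}=\infty$. Sequential bottleneck assignment: $\bar{\mathcal A}_1=\mathcal A$, $\bar{\mathcal T}_1=\mathcal T$; for $k=1,\dots,n$, $\bar{\mathcal E}_k=\bar{\mathcal A}_k\times\bar{\mathcal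 T}_k$, choose $(i^*_k,j^*_k)\in e_{\bar{\mathcal A}_k,\bar{\mathcal T}_k}$, set $\mu_k=r_{\bar{\mathcal A}_k,\bar{\mathcal T}_k}$, $\bar{\mathcal A}_{k+1}=\bar{\mathcal A}_k\setminus\{i^*_k\}$, $\bar{\mathcal T}_{k+1}=\bar{\mathcal T}_k\setminus\{j^*_k\}$. Given these choices, $\Pi^*$ is sequential bottleneck optimising if $\Pi^*\in\mathcal B_{\bar{\mathcal A}_k,\bar{\mathcal T}_k}(\bar{\mathcal E}_k)$ for all $k$. *)

(* Defs.v *)
From HB Require Import structures.
From mathcomp Require Import all_boot all_order all_algebra.
Set Implicit Arguments. Unset Strict Implicit. Unset Printing Implicit Defensive.
Import Order.TTheory GRing.Theory Num.Theory.
Local Open Scope ring_scope.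

(* Extended reals R ∪ {+oo}, used for B (min over empty set = +oo) and r (= oo). *)
Section Ext.
Variable R : realFieldType.

Inductive extR := Fin of R | PInf.

Definition emin (x y : extR) : extR :=
  match x, y with
  | Fin a, Fin b => Fin (Num.min a b)
  | Fin a, PInf => Fin a
  | PInf, y => y
  end.

Definition emax (x y : extR) : extR :=
  match x, y with
  | Fin a, Fin b => Fin (Num.max a b)
  | _, _ => PInf
  end.

Definition ele (x y : extR) : bool :=
  match x, y with
  | _, PInf => true
  | PInf, Fin _ => false
  | Fin a, Fin b => a <= b
  end.

Definition elt (x y : extR) : bool :=
  match x, y with
  | Fin a, PInf => true
  | Fin a, Fin b => a < b
  | PInf, _ => false
  end.

Definition eaddr (x : extR) (c : R) : extR :=
  match x with Fin a => Fin (a + c) | PInf => PInf end.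

Definition eqf (x : extR) (c : R) : bool :=
  match x with Fin a => a == c | PInf => false end.

(* real value of a (provably finite) extended real; default 0 for +oo *)
Definition fin_val (x : extR) : R :=
  match x with Fin a => a | PInf => 0 end.

End Ext.
Arguments PInf {R}.

Section Bottleneck.
Variables (R : realFieldType) (A T : finType) (w : A -> T -> R).

Definition assignment := {ffun A * T -> bool}.

Definition feasible (Ab : {set A}) (Tb : {set T}) (E : {set A * T})
    (P : assignment) : bool :=
  [forall j in Tb, (\sum_(i : A | (i, j) \in E) (P (i, j) : nat))%N == 1%N] &&
  [forall i in Ab, (\sum_(j : T | (i, j) \in E) (P (i, j) : nat))%N <= 1]%N.

Definition bval (P : assignment) (E : {set A * T}) : R :=
  \big[Num.max/0]_(e in E) ((P e : nat)%:R * w e.1 e.2).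

Definition Bv (Ab : {set A}) (Tb : {set T}) (E : {set A * T}) : extR R :=
  \big[@emin R/PInf]_(P : assignment | feasible Ab Tb E P) Fin (bval P E).

Definition Bset (Ab : {set A}) (Tb : {set T}) (E : {set A * T}) : {set assignment} :=
  [set P | feasible Ab Tb E P & eqf (Bv Ab Tb E) (bval P E)].

Definition Eset (Ab : {set A}) (Tb : {set T}) (E : {set A * T}) : {set A * T} :=
  [set e in E | eqf (Bv Ab Tb E) (w e.1 e.2)].

Definition eset (Ab : {set A}) (Tb : {set T}) : {set A * T} :=
  let Eb := setX Ab Tb in
  if #|Eb| == 1%N then Eb
  else [set e in Eset Ab Tb Eb |
         [forall e' in Eset Ab Tb Eb,
            ele (Bv Ab Tb (Eb :\ e')) (Bv Ab Tb (Eb :\ e))]].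

(* r_{Ab,Tb} : robustness margin (max over a nonempty set of values >= 0;
   Fin 0 is used as neutral element of the iterated max) *)
Definition rmargin (Ab : {set A}) (Tb : {set T}) : extR R :=
  let Eb := setX Ab Tb in
  if #|Eb| == 1%N then PInf
  else \big[@emax R/Fin 0]_(e in Eset Ab Tb Eb)
          eaddr (Bv Ab Tb (Eb :\ e)) (- w e.1 e.2).

(* Sequential construction, indices k = 0..n-1 standing for 1..n *)
Variables (n : nat) (istar : 'I_n -> A) (jstar : 'I_n -> T).

Definition Abar (k : nat) : {set A} :=
  [set i | [forall l : 'I_n, (l < k)%N ==> (istar l != i)]].
Definition Tbar (k : nat) : {set T} :=
  [set j | [forall l : 'I_n, (l < k)%N ==> (jstar l != j)]].

Definition seq_bottleneck (mu : 'I_n -> extR R) : Prop :=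
  forall k : 'I_n,
    (istar k, jstar k) \in eset (Abar k) (Tbar k) /\
    mu k = rmargin (Abar k) (Tbar k).

Definition seq_bottleneck_optimising (P : assignment) : Prop :=
  forall k : 'I_n, P \in Bset (Abar k) (Tbar k) (setX (Abar k) (Tbar k)).

Definition mu_min (mu : 'I_n -> extR R) : extR R :=
  \big[@emin R/PInf]_(k : 'I_n) mu k.

Definition Ak (mu : 'I_n -> extR R) (s : R) (k : nat) : R :=
  fin_val (\big[@emin R/PInf]_(l : 'I_n | (l <= k)%N)
              eaddr (mu l) (w (istar l) (jstar l)))
  - (fin_val (mu_min mu) + s) / 2.

Definition agent_bound (mu : 'I_n -> extR R) (s : R) (a : R -> R)
    (i : A) (t : R) : R :=
  match [pick k : 'I_n | istar k == i] with
  | Some k => Num.min (a t) (Ak mu s k)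
  | None => Num.min (a t) (Ak mu s n.-1)
  end.

Definition task_bound (mu : 'I_n -> extR R) (s : R) (a : R -> R)
    (k : 'I_n) (t : R) : R :=
  Ak mu s k - Num.min (a t) (Ak mu s k) + (fin_val (mu_min mu) - s) / 2.

End Bottleneck.

(* Main.v *)
Require Import Defs.
From HB Require Import structures.
From mathcomp Require Import all_boot all_order all_algebra all_fingroup.
From mathcomp Require Import lra.
Import Order.TTheory GRing.Theory Num.Theory.
Local Open Scope ring_scope.
Set Implicit Arguments. Unset Strict Implicit.

Section ExtLemmas.
Variable R : realFieldType.
Implicit Types x y z : extR R.

Lemma ele_refl x : ele x x.
Proof. by case: x => //= a. Qed.

Lemma ele_trans x y z : ele x y -> ele y z -> ele x z.
Proof.
case: x => [a|]; case: y => [b|]; case: z => [c|] //=.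
exact: le_trans.
Qed.

Lemma emin_l x y : ele (emin x y) x.
Proof. case: x => [a|]; case: y => [b|] //=; rewrite ?ge_min ?lexx //. Qed.

Lemma emin_r x y : ele (emin x y) y.
Proof. case: x => [a|]; case: y => [b|] //=; rewrite ?ge_min ?lexx ?orbT //. Qed.

Lemma emin_glb x y z : ele z x -> ele z y -> ele z (emin x y).
Proof.
case: x => [a|]; case: y => [b|]; case: z => [c|] //=.
by move=> h1 h2; rewrite le_min h1 h2.
Qed.

Lemma emax_lub x y (c : R) : ele x (Fin c) -> ele y (Fin c) -> ele (emax x y) (Fin c).
Proof.
case: x => [a|]; case: y => [b|] //=.
by move=> h1 h2; rewrite ge_max h1 h2.
Qed.

Lemma elt_ele_trans (a : R) x y : elt (Fin a) x -> ele x y -> elt (Fin a) y.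
Proof.
case: x => [b|]; case: y => [c|] //=.
exact: lt_le_trans.
Qed.

Lemma big_emin_le (I : eqType) (r : seq I) (P : pred I) (F : I -> extR R) i :
  i \in r -> P i -> ele (\big[@emin R/PInf]_(j <- r | P j) F j) (F i).
Proof.
elim: r => [//|x r IH]; rewrite inE big_cons => /orP [/eqP <-|ir] Pi.
  by rewrite Pi; apply: emin_l.
case: (P x); last exact: IH.
by apply: ele_trans (emin_r _ _) _; apply: IH.
Qed.

Lemma big_emin_leF (I : finType) (P : pred I) (F : I -> extR R) i :
  P i -> ele (\big[@emin R/PInf]_(j | P j) F j) (F i).
Proof. by move=> Pi; apply: big_emin_le => //; rewrite mem_index_enum. Qed.

Lemma big_emin_glb (I : finType) (P : pred I) (F : I -> extR R) z :
  (forall i, P i -> ele z (F i)) -> ele z (\big[@emin R/PInf]_(j | P j) F j).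
Proof.
move=> h; apply: (big_ind (fun x => ele z x)) => //.
  by case: z {h}.
by move=> x y; apply: emin_glb.
Qed.

Lemma big_max_le (I : eqType) (r : seq I) (P : pred I) (F : I -> R) i :
  i \in r -> P i -> F i <= \big[Num.max/0]_(j <- r | P j) F j.
Proof.
elim: r => [//|x r IH]; rewrite inE big_cons => /orP [/eqP <-|ir] Pi.
  by rewrite Pi le_max lexx.
case: (P x); last exact: IH.
by rewrite le_max (IH ir Pi) orbT.
Qed.

Lemma big_max_leF (I : finType) (P : pred I) (F : I -> R) i :
  P i -> F i <= \big[Num.max/0]_(j | P j) F j.
Proof. by move=> Pi; apply: big_max_le => //; rewrite mem_index_enum. Qed.

Lemma big_max_lub (I : finType) (P : pred I) (F : I -> R) c :
  0 <= c -> (forall i, P i -> F i <= c) -> \big[Num.max/0]_(j | P j) F j <= c.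
Proof.
move=> c0 h; elim/big_ind: _ => //.
by move=> x y h1 h2; rewrite ge_max h1 h2.
Qed.

Lemma big_max_ge0 (I : finType) (P : pred I) (F : I -> R) :
  0 <= \big[Num.max/0]_(j | P j) F j.
Proof.
elim: (index_enum I) => [|x r IH]; first by rewrite big_nil.
rewrite big_cons; case: (P x) => //.
by rewrite le_max IH orbT.
Qed.

End ExtLemmas.

Lemma sum_le1_uniq (I : finType) (P : pred I) (b : I -> bool) x y :
  (\sum_(i | P i) (b i : nat) <= 1)%N -> P x -> b x -> P y -> b y -> x = y.
Proof.
move=> hs Px bx Py byy; apply/eqP; apply/negPn/negP => nxy.
move: hs; rewrite (bigD1 x) //= (bigD1 y) /=; last by rewrite Py eq_sym.
by rewrite bx byy.
Qed.

Lemma sum_eq1_ex (I : finType) (P : pred I) (b : I -> bool) :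
  (\sum_(i | P i) (b i : nat) == 1)%N -> exists x, P x && b x.
Proof.
move=> hs; case: (pickP (fun x => P x && b x)) => [x hx|h]; first by exists x.
move: hs; rewrite big1 // => i Pi; move: (h i); rewrite Pi /=.
by move ->.
Qed.
Section Main.
Variables (R : realFieldType) (A T : finType) (w : A -> T -> R) (n : nat)
  (istar : 'I_n -> A) (jstar : 'I_n -> T) (mu : 'I_n -> extR R)
  (Pi : assignment A T).
Hypotheses (hseq : seq_bottleneck w istar jstar mu)
  (hopt : seq_bottleneck_optimising w istar jstar Pi)
  (hpos : forall k, elt (Fin 0) (mu k)) (hcard : #|T| = n).

Local Notation Ab k := (Abar istar k).
Local Notation Tb k := (Tbar jstar k).
Local Notation Eb k := (setX (Abar istar k) (Tbar jstar k)).
Local Notation ek k := (istar k, jstar k).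

Lemma in_Abar i (k : nat) : (i \in Ab k) = [forall l : 'I_n, (l < k)%N ==> (istar l != i)].
Proof. by rewrite inE. Qed.
Lemma in_Tbar j (k : nat) : (j \in Tb k) = [forall l : 'I_n, (l < k)%N ==> (jstar l != j)].
Proof. by rewrite inE. Qed.

Lemma eset_sub (Ab' : {set A}) (Tb' : {set T}) e :
  e \in eset w Ab' Tb' -> e \in setX Ab' Tb'.
Proof.
rewrite /eset; case: ifP => // _; rewrite inE => /andP [].
by rewrite /Eset inE => /andP [].
Qed.

Lemma ek_in (k : 'I_n) : ek k \in Eb k.
Proof. exact: eset_sub (proj1 (hseq k)). Qed.

Lemma istar_Ab (k : 'I_n) : istar k \in Ab k.
Proof. by have := ek_in k; rewrite in_setX => /andP []. Qed.
Lemma jstar_Tb (k : 'I_n) : jstar k \in Tb k.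
Proof. by have := ek_in k; rewrite in_setX => /andP []. Qed.

Lemma Ab_mono (k l : nat) i : (k <= l)%N -> i \in Ab l -> i \in Ab k.
Proof.
move=> kl; rewrite !in_Abar => /forallP h; apply/forallP => l'.
apply/implyP => hl'; apply: (implyP (h l')); exact: leq_trans hl' kl.
Qed.
Lemma Tb_mono (k l : nat) j : (k <= l)%N -> j \in Tb l -> j \in Tb k.
Proof.
move=> kl; rewrite !in_Tbar => /forallP h; apply/forallP => l'.
apply/implyP => hl'; apply: (implyP (h l')); exact: leq_trans hl' kl.
Qed.

Lemma istar_lt (k l : 'I_n) : (k < l)%N -> istar k != istar l.
Proof.
move=> kl; have := istar_Ab l; rewrite in_Abar => /forallP /(_ k).
by rewrite kl.
Qed.
Lemma jstar_lt (k l : 'I_n) : (k < l)%N -> jstar k != jstar l.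
Proof.
move=> kl; have := jstar_Tb l; rewrite in_Tbar => /forallP /(_ k).
by rewrite kl.
Qed.

Lemma istar_inj : injective istar.
Proof.
move=> k l h; case: (ltngtP k l) => [kl|lk|/val_inj //].
  by move: (istar_lt kl); rewrite h eqxx.
by move: (istar_lt lk); rewrite h eqxx.
Qed.
Lemma jstar_inj : injective jstar.
Proof.
move=> k l h; case: (ltngtP k l) => [kl|lk|/val_inj //].
  by move: (jstar_lt kl); rewrite h eqxx.
by move: (jstar_lt lk); rewrite h eqxx.
Qed.

Lemma eset_facts (k : 'I_n) : #|Eb k| != 1%N ->
  ek k \in Eset w (Ab k) (Tb k) (Eb k) /\
  forall e', e' \in Eset w (Ab k) (Tb k) (Eb k) ->
    ele (Bv w (Ab k) (Tb k) (Eb k :\ e')) (Bv w (Ab k) (Tb k) (Eb k :\ ek k)).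
Proof.
move=> h1; have := proj1 (hseq k); rewrite /eset /= (negbTE h1) inE => /andP [h2 /forallP h3].
split => // e' he'; exact: (implyP (h3 e') he').
Qed.

Lemma Bv_E (k : 'I_n) : #|Eb k| != 1%N ->
  Bv w (Ab k) (Tb k) (Eb k) = Fin (w (istar k) (jstar k)).
Proof.
move=> h1; have [h2 _] := eset_facts h1; move: h2; rewrite /Eset inE => /andP [_].
by case: (Bv _ _ _ _) => //= b /eqP ->.
Qed.

Lemma feasible_drop (Ab' : {set A}) (Tb' : {set T}) (E : {set A * T}) Q e :
  feasible Ab' Tb' E Q -> Q e = false -> feasible Ab' Tb' (E :\ e) Q.
Proof.
move=> /andP [/forallP hc /forallP hr] hQ; apply/andP; split.
  apply/forallP => j; apply/implyP => hj; move: (implyP (hc j) hj).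
  have -> : (\sum_(i | (i, j) \in E :\ e) (Q (i, j) : nat) =
            \sum_(i | (i, j) \in E) (Q (i, j) : nat))%N => //.
  rewrite big_mkcond [RHS]big_mkcond; apply: eq_bigr => i _; rewrite in_setD1; case: eqP => [he|_] //=.
  by rewrite -he in hQ; rewrite hQ; case: ifP.
apply/forallP => i; apply/implyP => hi; move: (implyP (hr i) hi).
have -> : (\sum_(j | (i, j) \in E :\ e) (Q (i, j) : nat) =
          \sum_(j | (i, j) \in E) (Q (i, j) : nat))%N => //.
rewrite big_mkcond [RHS]big_mkcond; apply: eq_bigr => j _; rewrite in_setD1; case: eqP => [he|_] //=.
by rewrite -he in hQ; rewrite hQ; case: ifP.
Qed.

Lemma bval_sub Q (E : {set A * T}) e :
  bval w Q (E :\ e) <= bval w Q E.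
Proof.
apply: big_max_lub; first exact: big_max_ge0.
move=> e' he'; apply: big_max_leF; move: he'; rewrite in_setD1 => /andP [].
by [].
Qed.

Lemma core (k : 'I_n) Q : #|Eb k| != 1%N ->
  feasible (Ab k) (Tb k) (Eb k) Q -> Q (ek k) = false ->
  exists m, mu k = Fin m /\ 0 < m /\ m + w (istar k) (jstar k) <= bval w Q (Eb k).
Proof.
move=> h1 hf hQ; have [hin hmax] := eset_facts h1.
set X := bval w Q (Eb k :\ ek k).
have hB : ele (Bv w (Ab k) (Tb k) (Eb k :\ ek k)) (Fin X).
  by apply: (big_emin_leF (fun P => Fin (bval w P (Eb k :\ ek k)))); apply: feasible_drop.
have hX : X <= bval w Q (Eb k) by apply: bval_sub.
have hE := Bv_E h1.
have hmu : ele (mu k) (Fin (Num.max 0 (X - w (istar k) (jstar k)))).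
  rewrite (proj2 (hseq k)) /rmargin /= (negbTE h1).
  elim/big_ind: _ => //.
  - by rewrite /= le_max lexx.
  - by move=> x y; apply: emax_lub.
  move=> e he; have := hmax e he; move: he; rewrite /Eset inE hE => /andP [_ /= /eqP we].
  move=> hle; have := ele_trans hle hB.
  case: (Bv _ _ _ _) => //= b hb.
  by rewrite le_max -we lerD2r hb orbT.
move: (hpos k) hmu; case: (mu k) => //= m m0 hm; exists m; split=> //; split=> //.
move: hm; rewrite le_max => /orP [hm|hm]; first by move: (lt_le_trans m0 hm); rewrite ltxx.
by rewrite -lerBrDr; apply: le_trans hm _; rewrite lerD2r.
Qed.

Lemma Pi_feas (k : 'I_n) : feasible (Ab k) (Tb k) (Eb k) Pi.
Proof. by have := hopt k; rewrite /Bset inE => /andP []. Qed.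

Lemma bvalPi (k : 'I_n) : #|Eb k| != 1%N -> bval w Pi (Eb k) = w (istar k) (jstar k).
Proof.
move=> h1; have := hopt k; rewrite /Bset inE (Bv_E h1) => /andP [_ /= /eqP ->].
by [].
Qed.

Lemma col_uniq (k : nat) j i1 i2 : feasible (Ab k) (Tb k) (Eb k) Pi ->
  j \in Tb k -> i1 \in Ab k -> Pi (i1, j) -> i2 \in Ab k -> Pi (i2, j) -> i1 = i2.
Proof.
move=> /andP [/forallP hc _] hj h1 p1 h2 p2.
have hs := implyP (hc j) hj; move/eqP: hs => hs.
apply: (@sum_le1_uniq _ (fun i => (i, j) \in Eb k) (fun i => Pi (i, j))) => //.
- by rewrite hs.
- by rewrite in_setX h1 hj.
- by rewrite in_setX h2 hj.
Qed.

Lemma row_uniq (k : nat) i j1 j2 : feasible (Ab k) (Tb k) (Eb k) Pi ->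
  i \in Ab k -> j1 \in Tb k -> Pi (i, j1) -> j2 \in Tb k -> Pi (i, j2) -> j1 = j2.
Proof.
move=> /andP [_ /forallP hr] hi h1 p1 h2 p2.
have hs := implyP (hr i) hi.
apply: (@sum_le1_uniq _ (fun j => (i, j) \in Eb k) (fun j => Pi (i, j))) => //.
- by rewrite in_setX h1 hi.
- by rewrite in_setX h2 hi.
Qed.

Lemma Pi_e (k : 'I_n) : Pi (ek k).
Proof.
apply/negPn/negP => hn.
case h1: (#|Eb k| == 1%N).
  have := Pi_feas k; move=> /andP [/forallP hc _].
  have [i /andP [hi pi]] := sum_eq1_ex (implyP (hc (jstar k)) (jstar_Tb k)).
  case/cards1P: h1 => x hx.
  have := ek_in k; rewrite hx inE => /eqP e1.
  move: hi; rewrite hx inE => /eqP e2.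
  have ei : i = istar k by have := etrans e2 (esym e1); case.
  by move: hn; rewrite -ei pi.
have [m [_ [m0 hm]]] := core (negbT h1) (Pi_feas k) (negbTE hn).
by move: hm; rewrite (bvalPi (negbT h1)) -lerBrDr subrr leNgt m0.
Qed.

Lemma tperm_Ab (k : nat) x y i : x \in Ab k -> y \in Ab k ->
  (tperm x y i \in Ab k) = (i \in Ab k).
Proof.
by move=> hx hy; case: tpermP => [->|->|_ _] //; rewrite ?hx ?hy.
Qed.

Definition swapP x y : assignment A T := [ffun e => Pi (tperm x y e.1, e.2)].

Lemma perm_feas (k : nat) x y : x \in Ab k -> y \in Ab k ->
  feasible (Ab k) (Tb k) (Eb k) Pi -> feasible (Ab k) (Tb k) (Eb k) (swapP x y).
Proof.
move=> hx hy /andP [/forallP hc /forallP hr]; apply/andP; split.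
  apply/forallP => j; apply/implyP => hj; move: (implyP (hc j) hj).
  have -> : (\sum_(i | (i, j) \in Eb k) (swapP x y (i, j) : nat) =
            \sum_(i | (i, j) \in Eb k) (Pi (i, j) : nat))%N => //.
  rewrite [RHS](reindex_inj (@perm_inj _ (tperm x y))) /=.
  apply: eq_big => i; first by rewrite !in_setX tperm_Ab.
  by rewrite ffunE.
apply/forallP => i; apply/implyP => hi.
have hi' : tperm x y i \in Ab k by rewrite tperm_Ab.
move: (implyP (hr _) hi').
have -> : (\sum_(j | (i, j) \in Eb k) (swapP x y (i, j) : nat) =
          \sum_(j | (tperm x y i, j) \in Eb k) (Pi (tperm x y i, j) : nat))%N => //.
apply: eq_big => j; first by rewrite !in_setX tperm_Ab.
by rewrite ffunE.
Qed.

Lemma w_star_ge0 (k : 'I_n) : #|Eb k| != 1%N -> 0 <= w (istar k) (jstar k).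
Proof. by move=> h1; rewrite -(bvalPi h1); apply: big_max_ge0. Qed.

Lemma Pi_term_le (k : 'I_n) i j : #|Eb k| != 1%N -> (i, j) \in Eb k -> Pi (i, j) ->
  w i j <= w (istar k) (jstar k).
Proof.
move=> h1 he p; rewrite -(bvalPi h1).
have := big_max_leF (fun e => (Pi e : nat)%:R * w e.1 e.2) he.
by rewrite p /= mul1r.
Qed.

Lemma card_ne1 (k : nat) (e1 e2 : A * T) : e1 \in Eb k -> e2 \in Eb k -> e1 != e2 ->
  #|Eb k| != 1%N.
Proof.
move=> h1 h2 ne; apply/negP => /cards1P [z hz].
move: h1 h2 ne; rewrite hz !inE => /eqP -> /eqP ->; by rewrite eqxx.
Qed.

Lemma cross (k l : 'I_n) : (k < l)%N -> exists m, mu k = Fin m /\ 0 < m /\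
  m + w (istar k) (jstar k) <= Num.max (w (istar k) (jstar l)) (w (istar l) (jstar k)).
Proof.
move=> kl.
have hx := istar_Ab k.
have hy : istar l \in Ab k := Ab_mono (ltnW kl) (istar_Ab l).
have hjl : jstar l \in Tb k := Tb_mono (ltnW kl) (jstar_Tb l).
have hxy := istar_lt kl.
have h1 : #|Eb k| != 1%N.
  apply: (@card_ne1 k (ek k) (istar k, jstar l)) => //; first exact: ek_in.
    by rewrite in_setX hx hjl.
  by apply/negP => /eqP [] /eqP; rewrite (negbTE (jstar_lt kl)).
have hf := perm_feas hx hy (Pi_feas k).
have hQ : swapP (istar k) (istar l) (ek k) = false.
  rewrite ffunE /= tpermL; apply/negP => p.
  have := col_uniq (Pi_feas k) (jstar_Tb k) hy p hx (Pi_e k).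
  by move/eqP; rewrite eq_sym (negbTE hxy).
have [m [hm [m0 hle]]] := core h1 hf hQ.
exists m; split=> //; split=> //.
set M := Num.max _ _.
have hb : bval w (swapP (istar k) (istar l)) (Eb k) <= Num.max M (w (istar k) (jstar k)).
  apply: big_max_lub; first by rewrite le_max (w_star_ge0 h1) orbT.
  move=> [i j] he /=; rewrite ffunE /=.
  case hp: (Pi (tperm (istar k) (istar l) i, j)); last by rewrite mul0r le_max (w_star_ge0 h1) orbT.
  rewrite mul1r; have hj : j \in Tb k by move: he; rewrite in_setX => /andP [].
  move: hp; case: tpermP => [->|->|ni1 ni2] p.
  - have := row_uniq (Pi_feas k) hy hjl (Pi_e l) hj p => <-.
    by rewrite le_max /M le_max lexx.
  - have := row_uniq (Pi_feas k) hx (jstar_Tb k) (Pi_e k) hj p => <-.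
    by rewrite le_max /M le_max lexx orbT.
  - by rewrite le_max (Pi_term_le h1 he p) orbT.
have := le_trans hle hb; rewrite le_max => /orP [//|].
by rewrite -lerBrDr subrr leNgt m0.
Qed.

Lemma jstar_onto j : exists l, j = jstar l.
Proof.
have := @inj_card_onto _ _ jstar jstar_inj; rewrite card_ord hcard leqnn => /(_ isT j).
by case/codomP => l ->; exists l.
Qed.

Lemma unassigned (k : 'I_n) u : (forall l, istar l != u) -> exists m, mu k = Fin m /\ 0 < m /\
  m + w (istar k) (jstar k) <= w u (jstar k).
Proof.
move=> hu.
have hx := istar_Ab k.
have hy : u \in Ab k by rewrite in_Abar; apply/forallP => l; apply/implyP => _; apply: hu.
have h1 : #|Eb k| != 1%N.
  apply: (@card_ne1 k (ek k) (u, jstar k)) => //; first exact: ek_in.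
    by rewrite in_setX hy jstar_Tb.
  by apply/negP => /eqP [] /eqP; rewrite (negbTE (hu k)).
have hf := perm_feas hx hy (Pi_feas k).
have hQ : swapP (istar k) u (ek k) = false.
  rewrite ffunE /= tpermL; apply/negP => p.
  have := col_uniq (Pi_feas k) (jstar_Tb k) hy p hx (Pi_e k).
  by move/eqP; rewrite eq_sym (negbTE (hu k)).
have [m [hm [m0 hle]]] := core h1 hf hQ.
exists m; split=> //; split=> //.
have hb : bval w (swapP (istar k) u) (Eb k) <= Num.max (w u (jstar k)) (w (istar k) (jstar k)).
  apply: big_max_lub; first by rewrite le_max (w_star_ge0 h1) orbT.
  move=> [i j] he /=; rewrite ffunE /=.
  case hp: (Pi (tperm (istar k) u i, j)); last by rewrite mul0r le_max (w_star_ge0 h1) orbT.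
  rewrite mul1r; have hj : j \in Tb k by move: he; rewrite in_setX => /andP [].
  move: hp; case: tpermP => [->|->|ni1 ni2] p.
  - exfalso; have [l el] := jstar_onto j.
    have lk : (k <= l)%N.
      rewrite leqNgt; apply/negP => lk; move: hj; rewrite in_Tbar => /forallP /(_ l).
      by rewrite lk el eqxx.
    have hl : istar l \in Ab k := Ab_mono lk (istar_Ab l).
    rewrite el in hj p.
    have := col_uniq (Pi_feas k) hj hy p hl (Pi_e l).
    by move/eqP; rewrite eq_sym (negbTE (hu l)).
  - have := row_uniq (Pi_feas k) hx (jstar_Tb k) (Pi_e k) hj p => <-.
    by rewrite le_max lexx.
  - by rewrite le_max (Pi_term_le h1 he p) orbT.
have := le_trans hle hb; rewrite le_max => /orP [//|].
by rewrite -lerBrDr subrr leNgt m0.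
Qed.

End Main.

Definition Ecap (R : realFieldType) (A T : finType) (w : A -> T -> R) (n : nat)
  (istar : 'I_n -> A) (jstar : 'I_n -> T) (mu : 'I_n -> extR R) (k : nat) :=
  \big[@emin R/PInf]_(l : 'I_n | (l <= k)%N) eaddr (mu l) (w (istar l) (jstar l)).

Lemma Ecap_mono (R : realFieldType) (A T : finType) (w : A -> T -> R) (n : nat)
  (istar : 'I_n -> A) (jstar : 'I_n -> T) (mu : 'I_n -> extR R) (k l : nat) :
  (k <= l)%N -> ele (Ecap w istar jstar mu l) (Ecap w istar jstar mu k).
Proof.
move=> kl; apply: big_emin_glb => i ik; apply: big_emin_leF; exact: leq_trans ik kl.
Qed.

Lemma Ecap_term (R : realFieldType) (A T : finType) (w : A -> T -> R) (n : nat)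
  (istar : 'I_n -> A) (jstar : 'I_n -> T) (mu : 'I_n -> extR R) (k : 'I_n) :
  ele (Ecap w istar jstar mu k) (eaddr (mu k) (w (istar k) (jstar k))).
Proof. exact: big_emin_leF. Qed.

Lemma min_facts (R : realFieldType) (al A1 A2 : R) : A2 <= A1 ->
  Num.min al A2 <= Num.min al A1 /\ Num.min al A1 - Num.min al A2 <= A1 - A2.
Proof.
move=> h; rewrite !minEle; case: (lerP al A2) => h1; case: (lerP al A1) => h2; split; lra.
Qed.

Lemma ab_star (R : realFieldType) (A T : finType) (w : A -> T -> R) (n : nat)
  (istar : 'I_n -> A) (jstar : 'I_n -> T) (mu : 'I_n -> extR R) s a (k : 'I_n) t :
  injective istar ->
  agent_bound w istar jstar mu s a (istar k) t = Num.min (a t) (Ak w istar jstar mu s k).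
Proof.
move=> hinj; rewrite /agent_bound; case: pickP => [k' /eqP /hinj -> //|h].
by move: (h k); rewrite eqxx.
Qed.

Lemma ab_none (R : realFieldType) (A T : finType) (w : A -> T -> R) (n : nat)
  (istar : 'I_n -> A) (jstar : 'I_n -> T) (mu : 'I_n -> extR R) s a u t :
  (forall l, istar l != u) ->
  agent_bound w istar jstar mu s a u t = Num.min (a t) (Ak w istar jstar mu s n.-1).
Proof.
move=> hu; rewrite /agent_bound; case: pickP => [k' /eqP ek|//].
by move: (hu k'); rewrite ek eqxx.
Qed.

Lemma elt_weak (R : realFieldType) (a b : R) x : b <= a -> elt (Fin a) x -> elt (Fin b) x.
Proof. by case: x => //= c ba ac; apply: le_lt_trans ba ac. Qed.

Unset Implicit Arguments.

Theorem theorem1 (R : realFieldType) (Ag Tk : finType) (np : nat)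
  (d : 'rV[R]_np -> 'rV[R]_np -> R)
  (hd0 : forall x y, 0 <= d x y)
  (hdsym : forall x y, d x y = d y x)
  (hdtri : forall x y z, d x z <= d x y + d y z)
  (Tend : R) (p : Ag -> R -> 'rV[R]_np) (g : Tk -> 'rV[R]_np)
  (sf : Ag -> Ag -> R)
  (hsf_sym : forall i i', i != i' -> sf i i' = sf i' i)
  (hsf0 : forall i i', i != i' -> 0 <= sf i i')
  (n : nat) (hm : (1 < #|Ag|)%N) (hn : #|Tk| = n) (hn1 : (1 <= n)%N)
  (hmn : (n <= #|Ag|)%N)
  (istar : 'I_n -> Ag) (jstar : 'I_n -> Tk) (mu : 'I_n -> extR R)
  (Pi : assignment Ag Tk) :
  let w := fun (i : Ag) (j : Tk) => d (p i 0) (g j) in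
  seq_bottleneck w istar jstar mu ->
  seq_bottleneck_optimising w istar jstar Pi ->
  forall s : R,
  (forall i i', i != i' -> sf i i' <= s) ->
  elt (Fin s) (mu_min mu) ->
  forall a : R -> R,
  (forall t, 0 <= t <= Tend -> (fin_val (mu_min mu) - s) / 2 <= a t) ->
  (forall t, 0 <= t <= Tend -> forall i : Ag,
      d (p i 0) (p i t) < agent_bound w istar jstar mu s a i t) ->
  (forall t, 0 <= t <= Tend -> forall k : 'I_n,
      d (p (istar k) t) (g (jstar k)) < task_bound w istar jstar mu s a k t) ->
  forall k : 'I_n, forall i' : Ag, i' != istar k ->
  forall t, 0 <= t <= Tend ->
    sf (istar k) i' < d (p (istar k) t) (p i' t).
Proof.
move=> w hseq hopt s hsf hmu a ha hab htb k i' hi' t ht.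
have hi'' : istar k != i' by rewrite eq_sym.
have s0 : 0 <= s := le_trans (hsf0 _ _ hi'') (hsf _ _ hi'').
have hpos : forall k, elt (Fin 0) (mu k).
  move=> k'; apply: elt_ele_trans (elt_weak s0 hmu) _; exact: big_emin_leF.
have hinj := istar_inj hseq.
apply: le_lt_trans (hsf _ _ hi'') _.
have hmmf : forall (k' : 'I_n) m, mu k' = Fin m -> exists mm, mu_min mu = Fin mm.
  move=> k' m hm'.
  have : ele (mu_min mu) (mu k') by apply: big_emin_leF.
  by rewrite hm'; case: (mu_min mu) => //= mm _; exists mm.
have hEk : forall k' : 'I_n, forall m, mu k' = Fin m ->
    exists x, Ecap w istar jstar mu k' = Fin x /\ x <= m + w (istar k') (jstar k').
  move=> k' m hm'; have := Ecap_term w istar jstar mu k'; rewrite hm'.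
  by case E: (Ecap w istar jstar mu k') => [x|] //= hx; exists x.
have hEl : forall (k' : nat) (l : nat) x, (k' <= l)%N -> Ecap w istar jstar mu k' = Fin x ->
    exists y, Ecap w istar jstar mu l = Fin y /\ y <= x.
  move=> k' l x kl hx; have := Ecap_mono w istar jstar mu kl; rewrite hx.
  by case E: (Ecap w istar jstar mu l) => [y|] //= hy; exists y.
have hAk : forall mm, mu_min mu = Fin mm -> forall (k' : nat) x, Ecap w istar jstar mu k' = Fin x ->
    Ak w istar jstar mu s k' = x - (mm + s) / 2.
  by move=> mm hmm k' x hx; rewrite /Ak -/(Ecap w istar jstar mu k') hx hmm.
have htb' : forall mm, mu_min mu = Fin mm -> forall k' : 'I_n, task_bound w istar jstar mu s a k' t =
    Ak w istar jstar mu s k' - Num.min (a t) (Ak w istar jstar mu s k') + (mm - s) / 2.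
  by move=> mm hmm k'; rewrite /task_bound hmm.
have pair : forall k1 k2 : 'I_n, (k1 < k2)%N -> s < d (p (istar k1) t) (p (istar k2) t).
  move=> k1 k2 kl.
  have [m [hm' [m0 hle]]] := cross hseq hopt hpos kl.
  have [mm hmm] := hmmf _ _ hm'.
  have smm : s < mm by move: hmu; rewrite hmm.
  have [x [hx1 hx2]] := hEk k1 m hm'.
  have [y [hy1 hy2]] := hEl k1 k2 x (ltnW kl) hx1.
  have H1 := hab t ht (istar k1); have H2 := hab t ht (istar k2).
  have H3 := htb t ht k1; have H4 := htb t ht k2.
  rewrite !ab_star // in H1 H2; rewrite (htb' _ hmm) in H3; rewrite (htb' _ hmm) in H4.
  rewrite (hAk _ hmm _ _ hx1) in H1 H3; rewrite (hAk _ hmm _ _ hy1) in H2 H4.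
  set al := a t in H1 H2 H3 H4.
  have [mf1 mf2] := @min_facts _ al (x - (mm + s) / 2) (y - (mm + s) / 2) ltac:(lra).
  move: H1 H2 H3 H4 mf1 mf2.
  set mk := Num.min al _; set ml := Num.min al _ => H1 H2 H3 H4 mf1 mf2.
  have T1 := hdtri (p (istar k1) 0) (p (istar k1) t) (g (jstar k2)).
  have T2 := hdtri (p (istar k1) t) (p (istar k2) t) (g (jstar k2)).
  have T3 := hdtri (p (istar k2) 0) (p (istar k2) t) (g (jstar k1)).
  have T4 := hdtri (p (istar k2) t) (p (istar k1) t) (g (jstar k1)).
  have S := hdsym (p (istar k2) t) (p (istar k1) t).
  move: hle hx2; rewrite le_max /w => /orP [] hle hx2; lra.
case: (pickP (fun l => istar l == i')) => [l /eqP el|hnone].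
  case: (ltngtP k l) => [kl|lk|/val_inj kl].
  - by rewrite -el; apply: pair.
  - by rewrite -el hdsym; apply: pair.
  - by move: hi'; rewrite -el kl eqxx.
have hu : forall l, istar l != i' by move=> l; rewrite hnone.
have [m [hm' [m0 hle]]] := unassigned hseq hopt hpos hn k hu.
have [mm hmm] := hmmf _ _ hm'.
have smm : s < mm by move: hmu; rewrite hmm.
have [x [hx1 hx2]] := hEk k m hm'.
have kn : (k <= n.-1)%N by case: k {hm' hx1 hx2 hle hi' hi''} => k /= kn; rewrite -ltnS prednK // (leq_ltn_trans _ kn).
have [y [hy1 hy2]] := hEl k n.-1 x kn hx1.
have H1 := hab t ht (istar k); have H2 := hab t ht i'.
have H3 := htb t ht k.
rewrite ab_star // in H1; rewrite ab_none // in H2; rewrite (htb' _ hmm) in H3.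
rewrite (hAk _ hmm _ _ hx1) in H1 H3; rewrite (hAk _ hmm _ _ hy1) in H2.
set al := a t in H1 H2 H3.
have [mf1 mf2] := @min_facts _ al (x - (mm + s) / 2) (y - (mm + s) / 2) ltac:(lra).
move: H1 H2 H3 mf1 mf2.
set mk := Num.min al _; set ml := Num.min al _ => H1 H2 H3 mf1 mf2.
have T3 := hdtri (p i' 0) (p i' t) (g (jstar k)).
have T4 := hdtri (p i' t) (p (istar k) t) (g (jstar k)).
have S := hdsym (p i' t) (p (istar k) t).
move: hle hx2; rewrite /w => hle hx2; lra.
Qed.
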